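(* For a nonzero nondegenerate m-triangle $\mathbf X$ with moment of inertia $I$, the following are equivalent: (a) its shape is a pole of the shape sphere, i.e. $m_j|\mathbf a_j|^2=\frac12(1-m_j)I$ for $j=1,2,3$; (b) $\lambda_1=\lambda_2$; (c) its area equals $\Delta_{\max}=\frac{I}{4\sqrt{m_1m_2m_3}}$, which is the maximal area among all m-triangles with the same moment of inertia $I$. In particular, the poles are the shapes uniquely characterized by (b) or (c).
   Context: Masses $m_1,m_2,m_3>0$, $m_1+m_2+m_3=1$; m-triangle $\mathbf X=(\mathbf a_1,\mathbf a_2,\mathbf a_3)$, $\mathbf a_i\in\mathbb R^3$, $\sum m_i\mathbf a_i=0$; $I=\sum m_i|\mathbf a_i|^2$; $\Delta$ is its area; $\lambda_1\le\lambda_2$ are the two smallest eigenvalues of the inertia tensor $B_{\mathbf X}(\mathbf u,\mathbf v)=\sum m_j(\mathbf u\times\mathbf a_j)\cdot(\mathbf v\times\mathbf a_j)$. The poles of the shape sphere (oriented m-triangles of size $I=1$ modulo rotation) are the shapes of the positively or negatively oriented m-triangles with $m_j|\mathbf a_j|^2=(1-m_j)/2$. *)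

(* Defs.v *)
From HB Require Import structures.
From mathcomp Require Import all_boot all_order all_algebra.
Set Implicit Arguments. Unset Strict Implicit. Unset Printing Implicit Defensive.
Import Order.TTheory GRing.Theory Num.Theory.
Local Open Scope ring_scope.

Section Defs.
Variable R : rcfType.

Definition dot (u v : 'rV[R]_3) : R := \sum_(i < 3) u 0 i * v 0 i.
Definition vnorm (u : 'rV[R]_3) : R := Num.sqrt (dot u u).
Definition cross (u v : 'rV[R]_3) : 'rV[R]_3 :=
  \row_(k < 3)
    (if k == 0 :> nat then u 0 1 * v 0 2%:R - u 0 2%:R * v 0 1
     else if k == 1 :> nat then u 0 2%:R * v 0 0 - u 0 0 * v 0 2%:R
     else u 0 0 * v 0 1 - u 0 1 * v 0 0).

Definition evec (i : 'I_3) : 'rV[R]_3 := delta_mx 0 i.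

(* an m-triangle: three points a : 'I_3 -> R^3 with centre of mass at 0 *)
Definition centered (m : 'I_3 -> R) (a : 'I_3 -> 'rV[R]_3) : Prop :=
  \sum_(j < 3) m j *: a j = 0.

Definition inertia (m : 'I_3 -> R) (a : 'I_3 -> 'rV[R]_3) : R :=
  \sum_(j < 3) m j * dot (a j) (a j).

Definition area (a : 'I_3 -> 'rV[R]_3) : R :=
  vnorm (cross (a 1 - a 0) (a 2%:R - a 0)) / 2.

Definition inertia_tensor (m : 'I_3 -> R) (a : 'I_3 -> 'rV[R]_3) : 'M[R]_3 :=
  \matrix_(i < 3, k < 3)
     \sum_(j < 3) m j * dot (cross (evec i) (a j)) (cross (evec k) (a j)).

Definition sorted_eigenvalues (B : 'M[R]_3) (s : seq R) : Prop :=
  sorted <=%R s /\ char_poly B = \prod_(x <- s) ('X - x%:P).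

End Defs.

(* Main.v *)
Require Import Defs.
From HB Require Import structures.
From mathcomp Require Import all_boot all_order all_algebra.
From mathcomp Require Import ring lra.
Import Order.TTheory GRing.Theory Num.Theory.
Local Open Scope ring_scope.

Lemma sum3 (V : nmodType) (F : 'I_3 -> V) : \sum_(j < 3) F j = F 0 + F 1 + F 2%:R.
Proof.
rewrite !big_ord_recr big_ord0 /= add0r.
by congr (F _ + F _ + F _); apply/val_inj.
Qed.

Lemma det3 (T : comNzRingType) (M : 'M[T]_3) : \det M =
  M 0 0 * (M 1 1 * M 2%:R 2%:R - M 1 2%:R * M 2%:R 1)
 - M 0 1 * (M 1 0 * M 2%:R 2%:R - M 1 2%:R * M 2%:R 0)
 + M 0 2%:R * (M 1 0 * M 2%:R 1 - M 1 1 * M 2%:R 0).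
Proof.
rewrite (expand_det_row _ 0) !big_ord_recr big_ord0 /= /cofactor.
rewrite !(expand_det_row _ 0) !big_ord_recr !big_ord0 /= /cofactor !det_mx11 !mxE /=.
set f := fun n k => M (inord n) (inord k).
have E : forall i j : 'I_3, M i j = f (val i) (val j).
  by move=> i j; rewrite /f !inord_val.
rewrite !E /=; ring.
Qed.

Section S.
Variable R : rcfType.
Implicit Types (u v x : 'rV[R]_3) (M : 'M[R]_3).

Lemma char_poly3 M : char_poly M =
  'X^3 - (M 0 0 + M 1 1 + M 2%:R 2%:R)%:P * 'X^2
  + (M 0 0 * M 1 1 - M 0 1 * M 1 0 + M 0 0 * M 2%:R 2%:R - M 0 2%:R * M 2%:R 0
     + M 1 1 * M 2%:R 2%:R - M 1 2%:R * M 2%:R 1)%:P * 'X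
  - (M 0 0 * (M 1 1 * M 2%:R 2%:R - M 1 2%:R * M 2%:R 1)
     - M 0 1 * (M 1 0 * M 2%:R 2%:R - M 1 2%:R * M 2%:R 0)
     + M 0 2%:R * (M 1 0 * M 2%:R 1 - M 1 1 * M 2%:R 0))%:P.
Proof.
rewrite /char_poly det3 /char_poly_mx !mxE /=.
rewrite !mulr1n !mulr0n.
ring.
Qed.

Lemma dotE u v : dot u v = u 0 0 * v 0 0 + u 0 1 * v 0 1 + u 0 2%:R * v 0 2%:R.
Proof. by rewrite /dot sum3. Qed.

Lemma crossE u v : [/\ cross u v 0 0 = u 0 1 * v 0 2%:R - u 0 2%:R * v 0 1,
  cross u v 0 1 = u 0 2%:R * v 0 0 - u 0 0 * v 0 2%:R &
  cross u v 0 2%:R = u 0 0 * v 0 1 - u 0 1 * v 0 0].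
Proof. by rewrite !mxE /=. Qed.

Lemma dot_cross_evec (i k : 'I_3) x :
  dot (cross (evec R i) x) (cross (evec R k) x) = (i == k)%:R * dot x x - x 0 i * x 0 k.
Proof.
have [-> | [-> | ->]] : i = 0 \/ i = 1 \/ i = 2%:R.
  by case: i => [[|[|[|//]]] ?]; [left|right;left|right;right]; apply/val_inj.
all: have [-> | [-> | ->]] : k = 0 \/ k = 1 \/ k = 2%:R by
  case: k => [[|[|[|//]]] ?]; [left|right;left|right;right]; apply/val_inj.
all: rewrite !dotE /cross /evec !mxE /=; ring.
Qed.

Lemma tensorE (m : 'I_3 -> R) (a : 'I_3 -> 'rV[R]_3) (i k : 'I_3) :
  inertia_tensor m a i k = (i == k)%:R * inertia m a - \sum_(j < 3) m j * (a j 0 i * a j 0 k).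
Proof.
rewrite mxE /inertia !sum3 !dot_cross_evec; ring.
Qed.

Lemma param (m : 'I_3 -> R) (a : 'I_3 -> 'rV[R]_3) :
  \sum_(j < 3) m j = 1 -> centered m a -> forall i : 'I_3,
  a 0 0 i = -(m 1 * (a 1 0 i - a 0 0 i) + m 2%:R * (a 2%:R 0 i - a 0 0 i)).
Proof.
move=> hs hc i.
have := congr1 (fun M : 'rV[R]_3 => M 0 i) hc; rewrite /= summxE sum3 !mxE.
rewrite sum3 in hs.
have hm0 : m 0 = 1 - m 1 - m 2%:R by rewrite -hs; ring.
rewrite hm0 => h.
apply/eqP; rewrite -subr_eq0; apply/eqP; rewrite -[RHS]h; ring.
Qed.

Lemma reduce (m : 'I_3 -> R) (a : 'I_3 -> 'rV[R]_3) :
  \sum_(j < 3) m j = 1 -> centered m a -> exists p q t : R,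
  0 <= p * q - t ^+ 2 /\
   dot (a 0) (a 0) = m 1 ^+ 2 * p + 2 * m 1 * m 2%:R * t + m 2%:R ^+ 2 * q /\
   dot (a 1) (a 1) = (1 - m 1) ^+ 2 * p - 2 * (1 - m 1) * m 2%:R * t + m 2%:R ^+ 2 * q /\
   dot (a 2%:R) (a 2%:R) = m 1 ^+ 2 * p - 2 * m 1 * (1 - m 2%:R) * t + (1 - m 2%:R) ^+ 2 * q /\
   inertia m a = m 1 * (1 - m 1) * p + m 2%:R * (1 - m 2%:R) * q - 2 * m 1 * m 2%:R * t /\
   area a = Num.sqrt (p * q - t ^+ 2) / 2 /\
   char_poly (inertia_tensor m a) = ('X - (inertia m a)%:P) *
     ('X^2 - (inertia m a)%:P * 'X + (m 0 * m 1 * m 2%:R * (p * q - t ^+ 2))%:P).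
Proof.
move=> hs hc.
have P := param m a hs hc.
rewrite sum3 in hs.
have hm0 : m 0 = 1 - m 1 - m 2%:R by rewrite -hs; ring.
pose U i := a 1 0 i - a 0 0 i.
pose V i := a 2%:R 0 i - a 0 0 i.
have E0 i : a 0 0 i = -(m 1 * U i + m 2%:R * V i) by rewrite P.
have E1 i : a 1 0 i = -(m 1 * U i + m 2%:R * V i) + U i by rewrite -E0 /U; ring.
have E2 i : a 2%:R 0 i = -(m 1 * U i + m 2%:R * V i) + V i by rewrite -E0 /V; ring.
have Ec : cross (a 1 - a 0) (a 2%:R - a 0) = cross (\row_i U i) (\row_i V i).
  by apply/rowP => k; rewrite !mxE.
clearbody U V.
exists (U 0 ^+ 2 + U 1 ^+ 2 + U 2%:R ^+ 2), (V 0 ^+ 2 + V 1 ^+ 2 + V 2%:R ^+ 2),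
  (U 0 * V 0 + U 1 * V 1 + U 2%:R * V 2%:R).
have W : dot (cross (\row_i U i) (\row_i V i)) (cross (\row_i U i) (\row_i V i)) =
  (U 0 ^+ 2 + U 1 ^+ 2 + U 2%:R ^+ 2) * (V 0 ^+ 2 + V 1 ^+ 2 + V 2%:R ^+ 2) -
  (U 0 * V 0 + U 1 * V 1 + U 2%:R * V 2%:R) ^+ 2.
  by rewrite dotE !mxE /=; ring.
have HI : inertia m a = m 1 * (1 - m 1) * (U 0 ^+ 2 + U 1 ^+ 2 + U 2%:R ^+ 2)
   + m 2%:R * (1 - m 2%:R) * (V 0 ^+ 2 + V 1 ^+ 2 + V 2%:R ^+ 2)
   - 2 * m 1 * m 2%:R * (U 0 * V 0 + U 1 * V 1 + U 2%:R * V 2%:R).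
  by rewrite /inertia sum3 !dotE !E0 !E1 !E2 hm0; ring.
split; [|split; [|split; [|split; [|split; [|split]]]]].
- by rewrite -W dotE; rewrite !addr_ge0 // -expr2 sqr_ge0.
- by rewrite dotE !E0; ring.
- by rewrite dotE !E1; ring.
- by rewrite dotE !E2; ring.
- exact: HI.
- by rewrite /area /vnorm Ec W.
set I := inertia m a. set cW := m 0 * m 1 * m 2%:R * _.
apply: (@etrans _ _ ('X^3 - (2*I)%:P*'X^2 + (I^2+cW)%:P*'X - (I*cW)%:P)); last by ring.
rewrite char_poly3 !tensorE /= !sum3 !E0 !E1 !E2 /cW /I HI hm0.
congr (_ - _ * _ + _ * _ - _); congr (_%:P); ring.
Qed.
Lemma dot_ge0 x : 0 <= dot x x.
Proof. by rewrite dotE -!expr2 !addr_ge0 // sqr_ge0. Qed.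

Lemma ord3 (j : 'I_3) : j = 0 \/ j = 1 \/ j = 2%:R.
Proof. by case: j => [[|[|[|//]]] ?]; [left|right;left|right;right]; apply/val_inj. Qed.
End S.


Section S2.
Variable R : rcfType.

Lemma sos (m1 m2 p q t n0 s I L1 L2 : R) :
  n0 = 1 - m1 - m2 -> s = 1 - m2 ->
  I = m1 * (1 - m1) * p + m2 * (1 - m2) * q - 2 * m1 * m2 * t ->
  L1 = n0 * m1 * p - s ^+ 2 * m2 * q + 2 * s * m1 * m2 * t - m1 ^+ 2 * m2 * p ->
  L2 = s * t - m1 * p ->
  s ^+ 2 * (I ^+ 2 - 4 * (n0 * m1 * m2 * (p * q - t ^+ 2))) =
  L1 ^+ 2 + 4 * (n0 * m1 * m2) * L2 ^+ 2.
Proof. by move=> -> -> -> -> ->; ring. Qed.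

Lemma poleE (m1 m2 p q t n0 s I L1 L2 : R) :
  n0 = 1 - m1 - m2 -> s = 1 - m2 ->
  I = m1 * (1 - m1) * p + m2 * (1 - m2) * q - 2 * m1 * m2 * t ->
  L1 = n0 * m1 * p - s ^+ 2 * m2 * q + 2 * s * m1 * m2 * t - m1 ^+ 2 * m2 * p ->
  L2 = s * t - m1 * p ->
  [/\ 2 * s ^+ 2 * (n0 * (m1 ^+ 2 * p + 2 * m1 * m2 * t + m2 ^+ 2 * q) - (1 - n0) / 2 * I)
      = ((1 - n0) * s - 2 * n0 * m2) * L1 + 4 * n0 * m1 * m2 * L2,
      2 * s ^+ 2 * (m1 * ((1 - m1) ^+ 2 * p - 2 * (1 - m1) * m2 * t + m2 ^+ 2 * q) - (1 - m1) / 2 * I)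
      = ((1 - m1) * s - 2 * m1 * m2) * L1 - 4 * n0 * m1 * m2 * L2 &
      2 * s ^+ 2 * (m2 * (m1 ^+ 2 * p - 2 * m1 * (1 - m2) * t + (1 - m2) ^+ 2 * q) - (1 - m2) / 2 * I)
      = - s ^+ 2 * L1].
Proof. by move=> -> -> -> -> ->; split; field. Qed.

Lemma D_ge0 (m1 m2 p q t n0 I : R) :
  n0 = 1 - m1 - m2 ->
  I = m1 * (1 - m1) * p + m2 * (1 - m2) * q - 2 * m1 * m2 * t ->
  0 < m1 -> 0 < m2 -> 0 < n0 ->
  0 <= I ^+ 2 - 4 * (n0 * m1 * m2 * (p * q - t ^+ 2)).
Proof.
move=> hn hI h1 h2 h0.
have hs := sos _ _ _ _ _ _ _ _ _ _ hn (erefl (1 - m2)) hI (erefl _) (erefl _).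
have spos : 0 < (1 - m2) ^+ 2 by rewrite exprn_gt0 //; lra.
rewrite -(pmulr_rge0 _ spos) hs.
rewrite addr_ge0 ?sqr_ge0 // mulr_ge0 ?sqr_ge0 // mulr_ge0 // !mulr_ge0 // ltW //.
Qed.

Lemma pole_iff (m1 m2 p q t n0 I : R) :
  n0 = 1 - m1 - m2 ->
  I = m1 * (1 - m1) * p + m2 * (1 - m2) * q - 2 * m1 * m2 * t ->
  0 < m1 -> 0 < m2 -> 0 < n0 ->
  [/\ n0 * (m1 ^+ 2 * p + 2 * m1 * m2 * t + m2 ^+ 2 * q) = (1 - n0) / 2 * I,
      m1 * ((1 - m1) ^+ 2 * p - 2 * (1 - m1) * m2 * t + m2 ^+ 2 * q) = (1 - m1) / 2 * I &
      m2 * (m1 ^+ 2 * p - 2 * m1 * (1 - m2) * t + (1 - m2) ^+ 2 * q) = (1 - m2) / 2 * I]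
  <-> I ^+ 2 - 4 * (n0 * m1 * m2 * (p * q - t ^+ 2)) = 0.
Proof.
move=> hn hI h1 h2 h0.
set s := 1 - m2.
set L1 := n0 * m1 * p - s ^+ 2 * m2 * q + 2 * s * m1 * m2 * t - m1 ^+ 2 * m2 * p.
set L2 := s * t - m1 * p.
have hs := sos _ _ _ _ _ _ _ _ _ _ hn (erefl s) hI (erefl L1) (erefl L2).
have [e0 e1 e2] := poleE _ _ _ _ _ _ _ _ _ _ hn (erefl s) hI (erefl L1) (erefl L2).
have sn0 : s != 0 by rewrite /s; apply/eqP; lra.
have s2n0 : s ^+ 2 != 0 by rewrite expf_neq0.
have cn0 : n0 * m1 * m2 != 0 by rewrite !mulf_neq0 // gt_eqF.
have c4 : 4 * n0 * m1 * m2 != 0 by rewrite !mulf_neq0 // gt_eqF //; lra.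
have c4' : 4 * (n0 * m1 * m2) != 0 by rewrite !mulrA.
have c2 : 2 * s ^+ 2 != 0 by rewrite mulf_neq0 // gt_eqF //; lra.
split.
- case=> k0 k1 k2.
  have hL1 : L1 = 0.
    move: e2; rewrite k2 subrr mulr0 mulNr => /eqP; rewrite eq_sym oppr_eq0 mulf_eq0.
    by rewrite (negbTE s2n0) => /eqP.
  have hL2 : L2 = 0.
    move: e0; rewrite k0 subrr mulr0 hL1 mulr0 add0r => /eqP; rewrite eq_sym.
    by rewrite mulf_eq0 (negbTE c4) => /eqP.
  apply/eqP; rewrite -(mulIr_eq0 _ (mulIf s2n0)) mulrC hs hL1 hL2.
  by rewrite expr0n /= mulr0 addr0.
- move=> D0.
  move: hs; rewrite D0 mulr0 => /esym /eqP.
  have hB : 0 <= 4 * (n0 * m1 * m2) * L2 ^+ 2.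
    apply: mulr_ge0; last exact: sqr_ge0.
    apply: mulr_ge0; first lra.
    by rewrite !mulr_ge0 // ltW.
  rewrite paddr_eq0 ?sqr_ge0 //.
  rewrite sqrf_eq0 mulf_eq0 sqrf_eq0 (negbTE c4') /=.
  case/andP => /eqP hL1 /eqP hL2.
  move: e0 e1 e2; rewrite hL1 hL2 !mulr0 ?addr0 ?subr0 => e0 e1 e2.
  have k e : 2 * s ^+ 2 * e = 0 -> e = 0.
    by move/eqP; rewrite mulf_eq0 (negbTE c2) => /eqP.
  by split; apply/eqP; rewrite -subr_eq0; apply/eqP; apply: k; [exact: e0|exact: e1|exact: e2].
Qed.

Lemma eig3 (I cW : R) : 0 <= cW -> 0 <= I ^+ 2 - 4 * cW -> 0 <= I ->
  (exists s : seq R, (sorted <=%R s /\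
     ('X - I%:P) * ('X^2 - I%:P * 'X + cW%:P) = \prod_(x <- s) ('X - x%:P)) /\ s`_0 = s`_1)
  <-> I ^+ 2 - 4 * cW = 0.
Proof.
move=> hc hD hI.
set D := I ^+ 2 - 4 * cW in hD *.
set d := Num.sqrt D.
have hd2 : d ^+ 2 = D by rewrite sqr_sqrtr.
have hd0 : 0 <= d by rewrite sqrtr_ge0.
have hdI : d <= I.
  rewrite -(ler_pXn2r (n := 2)) // ?qualifE //= hd2 /D; lra.
set r1 := (I - d) / 2. set r2 := (I + d) / 2.
have e1 : I = r1 + r2 by rewrite /r1 /r2; field.
have e2 : cW = r1 * r2.
  have -> : r1 * r2 = (I ^+ 2 - d ^+ 2) / 4 by rewrite /r1 /r2; field.
  by rewrite hd2 /D; field.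
have hp : ('X - I%:P) * ('X^2 - I%:P * 'X + cW%:P) =
    \prod_(x <- [:: r1; r2; I]) ('X - x%:P).
  transitivity (('X - I%:P) * ('X^2 - (r1 + r2)%:P * 'X + (r1 * r2)%:P)).
    by rewrite -e1 -e2.
  by rewrite !big_cons big_nil; ring.
have hsort : sorted <=%R [:: r1; r2; I].
  rewrite /= /r1 /r2 andbT; apply/andP; split; lra.
split.
- move=> [s [[hs hpr] h01]].
  have pe : perm_eq s [:: r1; r2; I] by apply: prod_XsubC_eq; rewrite -hpr hp.
  have es := sorted_eq (@le_trans _ R) (@le_anti _ R) hs hsort pe.
  move: h01; rewrite es /= /r1 /r2 => h01.
  have d0 : d = 0 by lra.
  by rewrite -hd2 d0 expr0n.
- move=> D0.
  have d0 : d = 0 by rewrite /d D0 sqrtr0.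
  exists [:: r1; r2; I]. split. split. exact: hsort. exact: hp.
  by rewrite /= /r1 /r2 d0 subr0 addr0.
Qed.
End S2.


Lemma area_bound (R : rcfType) (c W I : R) : 0 < c -> 0 <= W -> 0 <= I ->
  (Num.sqrt W / 2 <= I / (4 * Num.sqrt c) <-> 4 * (c * W) <= I ^+ 2) /\
  (Num.sqrt W / 2 = I / (4 * Num.sqrt c) <-> 4 * (c * W) = I ^+ 2).
Proof.
move=> hc hW hI.
have sc : 0 < Num.sqrt c by rewrite sqrtr_gt0.
set g := 2 * (Num.sqrt c * Num.sqrt W).
have g0 : 0 <= g by rewrite /g !mulr_ge0 ?sqrtr_ge0.
have e4 : 4 * (c * W) = g ^+ 2.
  by rewrite /g !exprMn !sqr_sqrtr // ?ltW //; ring.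
have eq1 : Num.sqrt W / 2 = g / (4 * Num.sqrt c).
  by rewrite /g; field; rewrite gt_eqF.
have k0 : 0 < (4 * Num.sqrt c)^-1 by rewrite invr_gt0 mulr_gt0.
rewrite eq1 e4; split.
- by rewrite ler_pM2r // ler_sqr ?nnegrE.
- split=> [h|/eqP].
    by congr (_ ^+ 2); exact: (mulIf (negbT (gt_eqF k0)) h).
  by rewrite eqrXn2 // => /eqP ->.
Qed.

Theorem mainTheorem13 (R : rcfType) (m : 'I_3 -> R) (a : 'I_3 -> 'rV[R]_3) :
  (forall j, 0 < m j) -> \sum_(j < 3) m j = 1 ->
  centered m a ->
  (exists j, a j != 0) ->
  area a != 0 ->
  let I := inertia m a in
  let Dmax := I / (4 * Num.sqrt (m 0 * m 1 * m 2%:R)) in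
  (* (a) pole  <->  (b) lambda_1 = lambda_2 *)
  ((forall j, m j * dot (a j) (a j) = (1 - m j) / 2 * I) <->
   (exists s, sorted_eigenvalues (inertia_tensor m a) s /\ s`_0 = s`_1)) /\
  (* (b) <-> (c) area equals Delta_max *)
  ((exists s, sorted_eigenvalues (inertia_tensor m a) s /\ s`_0 = s`_1) <->
   area a = Dmax) /\
  (* Delta_max is the maximal area among m-triangles with the same I *)
  (forall b : 'I_3 -> 'rV[R]_3, centered m b -> inertia m b = I -> area b <= Dmax).
Proof.
move=> hm hs hc _ har0 I Dmax.
have [p [q [t [hW [d0 [d1 [d2 [hI [har hcp]]]]]]]]] := reduce _ _ _ hs hc.
have hs3 := hs; rewrite sum3 in hs3.
have hm0 : m 0 = 1 - m 1 - m 2%:R by rewrite -hs3; ring.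
have m0p := hm 0; have m1p := hm 1; have m2p := hm 2%:R.
have cpos : 0 < m 0 * m 1 * m 2%:R by rewrite !mulr_gt0.
have Ige0 : 0 <= I.
  rewrite /I /inertia sum3; apply: addr_ge0; first apply: addr_ge0.
  have := mulr_ge0 (ltW (hm 0)) (dot_ge0 _ (a 0)); exact.
  have := mulr_ge0 (ltW (hm 1)) (dot_ge0 _ (a 1)); exact.
  have := mulr_ge0 (ltW (hm 2%:R)) (dot_ge0 _ (a 2%:R)); exact.
have Wpos : 0 < p * q - t ^+ 2.
  have : Num.sqrt (p * q - t ^+ 2) != 0.
    by apply: contra har0; rewrite har => /eqP ->; rewrite mul0r.
  by rewrite sqrtr_eq0 -ltNge.
set D := I ^+ 2 - 4 * (m 0 * m 1 * m 2%:R * (p * q - t ^+ 2)).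
have Dge0 : 0 <= D by exact: (@D_ge0 R (m 1) (m 2%:R) p q t (m 0) I hm0 hI m1p m2p m0p).
have hb : (exists s, sorted_eigenvalues (inertia_tensor m a) s /\ s`_0 = s`_1) <-> D = 0.
  rewrite /sorted_eigenvalues hcp.
  apply: eig3 => //; rewrite mulr_ge0 ?ltW //.
have hp := @pole_iff R (m 1) (m 2%:R) p q t (m 0) I hm0 hI m1p m2p m0p.
have [ab1 ab2] := @area_bound R _ _ _ cpos hW Ige0.
split; last split.
- rewrite hb; split.
  + move=> h; apply/hp; split; [move: (h 0) | move: (h 1) | move: (h 2%:R)];
    by rewrite ?d0 ?d1 ?d2.
  + move=> /hp [k0 k1 k2] j.
    by case: (ord3 j) => [->|[->|->]]; rewrite ?d0 ?d1 ?d2.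
- rewrite hb har; split=> [D0|h].
  + apply/ab2. by move/eqP: D0; rewrite subr_eq0 => /eqP.
  + by rewrite /D (ab2.1 h) subrr.
- move=> b hcb hIb.
  have [p' [q' [t' [hW' [_ [_ [_ [hI' [har' _]]]]]]]]] := reduce _ _ _ hs hcb.
  have [bb1 _] := @area_bound R _ _ _ cpos hW' Ige0.
  rewrite har'; apply/bb1.
  have hI2 : I = m 1 * (1 - m 1) * p' + m 2%:R * (1 - m 2%:R) * q' - 2 * m 1 * m 2%:R * t'.
    by rewrite -hIb hI'.
  have := @D_ge0 R (m 1) (m 2%:R) p' q' t' (m 0) I hm0 hI2 m1p m2p m0p.
  by rewrite subr_ge0.
Qed.
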